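(* For $d\geq 0$ and $n\geq 1$ let $\psi_d(n)=n^d$. For $n\geq 3$ define \[ D^{\psi}(n):=\begin{cases} 2n\log_{9/8}(2), & n\equiv 0\pmod 3,\\ 2n\log_{9/8}(2)+\log_{9/8}(3)-\log_{9/8}(n+2), & n\equiv 1\pmod 3,\\ (n+2)\log_{9/8}(2), & n\equiv 2\pmod 3,\ n\neq 5,\\ \log_{9/8}(512), & n=5. \end{cases} \] Let $n\geq 3$ and let $d$ be an integer with $d>D^{\psi}(n)$. Then \[ \frac{\bigl(q^{\psi_d}(n)\bigr)^2}{q^{\psi_d}(n-1)\,q^{\psi_d}(n+1)}<1 \quad\text{if and only if}\quad n\equiv 1\pmod 3 . \]
   Context: For a double sequence $\{g_d(n)\}_{d\geq 0,n\geq 1}$ of positive reals, the numbers $q^{g_d}(n)$ ($n\geq 0$) are defined as the coefficients of the power series \[ \sum_{n=0}^{\infty} q^{g_d}(n)\,t^n := \frac{1}{1-\sum_{n=1}^{\infty} g_d(n)\,t^n}. \] Here $g_d=\psi_d$, i.e. $\sum_n q^{\psi_d}(n)t^n = 1/(1-\sum_{n\ge1} n^d t^n)$. $\log_{9/8}$ denotes the logarithm to base $9/8$. *)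

(* Defs.v *)
From Stdlib Require Import Reals Lra Lia List.
Open Scope R_scope.

Definition psi (d n : nat) : nat := Nat.pow n d.

(* list [q(m-1); ...; q(0)] of coefficients of 1/(1 - sum_{n>=1} g(n) t^n) *)
Fixpoint qlist (g : nat -> nat) (m : nat) : list nat :=
  match m with
  | O => nil
  | S m' =>
      let l := qlist g m' in
      (* q(m') = 1 if m' = 0, else sum_{k=1}^{m'} g(k) q(m'-k);
         l = [q(m'-1); ...; q(0)], so nth (k-1) l = q(m'-k) *)
      let v := match m' with
               | O => 1%nat
               | _ => fold_right Nat.add 0%nat
                        (map (fun k => (g (S k) * nth k l 0%nat)%nat) (seq 0 m'))
               end in
      v :: l
  end.

Definition qcoef (g : nat -> nat) (n : nat) : nat := hd 0%nat (qlist g (S n)).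

Definition log98 (x : R) : R := ln x / ln (9/8).

Definition Dpsi (n : nat) : R :=
  if (n =? 5)%nat then log98 512
  else match (n mod 3)%nat with
  | O => 2 * INR n * log98 2
  | 1%nat => 2 * INR n * log98 2 + log98 3 - log98 (INR n + 2)
  | _ => (INR n + 2) * log98 2
  end.

Example q_test : map (qcoef (psi 0)) (seq 0 6) = (1::1::2::4::8::16::nil)%nat.
Proof. reflexivity. Qed.
Example q_test2 : map (qcoef (psi 1)) (seq 0 5) = (1::1::3::8::21::nil)%nat.
Proof. reflexivity. Qed.

(* Main.v *)
Require Import Defs.
From Stdlib Require Import Reals.
Open Scope R_scope.
From Stdlib Require Import Lia Lra Arith List.

Open Scope nat_scope.

Fixpoint sumn (F : nat -> nat) (m : nat) : nat :=
  match m with O => 0 | S m' => sumn F m' + F m' end.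

Lemma fold_add_init (l : list nat) x : fold_right Nat.add x l = fold_right Nat.add 0 l + x.
Proof. induction l; simpl; lia. Qed.

Lemma fold_sumn F m : fold_right Nat.add 0 (map F (seq 0 m)) = sumn F m.
Proof.
  induction m; [reflexivity|].
  rewrite seq_S, map_app, fold_right_app. simpl. rewrite fold_add_init, IHm. lia.
Qed.

Lemma sumn_ext F G m : (forall i, i < m -> F i = G i) -> sumn F m = sumn G m.
Proof. induction m; intros H; simpl; auto. rewrite IHm, H; auto. Qed.

Lemma sumn_le F G m : (forall i, i < m -> F i <= G i) -> sumn F m <= sumn G m.
Proof. induction m; intros H; simpl; auto. specialize (IHm (fun i Hi => H i ltac:(lia))). specialize (H m ltac:(lia)). lia. Qed.

Lemma sumn_head F m : sumn F (S m) = F 0 + sumn (fun i => F (S i)) m.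
Proof. induction m; simpl in *; lia. Qed.

Lemma sumn_rev G m : sumn (fun i => G (m - 1 - i)) m = sumn G m.
Proof.
  induction m; [reflexivity|].
  rewrite sumn_head. simpl sumn at 2.
  replace (S m - 1 - 0) with m by lia.
  rewrite (sumn_ext (fun i => G (S m - 1 - S i)) (fun i => G (m - 1 - i))) by (intros; f_equal; lia).
  rewrite IHm. lia.
Qed.

Lemma sumn_add F G m : sumn (fun i => F i + G i) m = sumn F m + sumn G m.
Proof. induction m; simpl; lia. Qed.

Lemma sumn_mulr F c m : sumn (fun i => F i * c) m = sumn F m * c.
Proof. induction m; simpl; auto. rewrite IHm. lia. Qed.

Lemma sumn_term F m j : j < m -> F j <= sumn F m.
Proof. induction m; intros; simpl. lia. destruct (Nat.eq_dec j m). subst; lia. specialize (IHm ltac:(lia)). lia. Qed.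

Lemma sumn_two F m j1 j2 : j1 < j2 -> j2 < m -> F j1 + F j2 <= sumn F m.
Proof. induction m; intros; simpl. lia. destruct (Nat.eq_dec j2 m). subst. pose proof (sumn_term F m j1 H). lia.
  specialize (IHm H ltac:(lia)). lia. Qed.

Lemma qlist_S g m : qlist g (S m) = qcoef g m :: qlist g m.
Proof. reflexivity. Qed.

Lemma qlist_nth g m i : i < m -> nth i (qlist g m) 0 = qcoef g (m - 1 - i).
Proof.
  revert i; induction m; intros i Hi; [lia|].
  rewrite qlist_S. destruct i; simpl. f_equal; lia.
  rewrite IHm by lia. f_equal; lia.
Qed.

Lemma qcoef_0 g : qcoef g 0 = 1.
Proof. reflexivity. Qed.

Lemma qcoef_S g m : qcoef g (S m) = sumn (fun j => g (S m - j) * qcoef g j) (S m).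
Proof.
  unfold qcoef at 1. cbn [qlist hd].
  change (fold_right Nat.add 0 (map (fun k => g (S k) * nth k (qlist g (S m)) 0) (seq 0 (S m))) =
          sumn (fun j => g (S m - j) * qcoef g j) (S m)).
  rewrite fold_sumn.
  rewrite (sumn_ext _ (fun i => (fun j => g (S m - j) * qcoef g j) (S m - 1 - i))).
  exact (sumn_rev (fun j => g (S m - j) * qcoef g j) (S m)).
  intros i Hi. rewrite qlist_nth by lia. f_equal; f_equal; lia.
Qed.

Open Scope nat_scope.

Fixpoint f (n : nat) : nat :=
  match n with 0 => 1 | 1 => 1 | 2 => 2 | 3 => 3 | 4 => 4 | S (S (S m)) => 3 * f m end.

Lemma f_plus3 m : 2 <= m -> f (S (S (S m))) = 3 * f m.
Proof. intros. destruct m as [|[|m]]; try lia. reflexivity. Qed.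

Lemma f_pos n : 1 <= f n.
Proof.
  induction n as [n IH] using lt_wf_ind.
  destruct (le_lt_dec n 4) as [H|H].
  - do 5 (destruct n as [|n]; [simpl; lia|]). lia.
  - replace n with (S (S (S (n-3)))) by lia. rewrite f_plus3 by lia. specialize (IH (n-3) ltac:(lia)). lia.
Qed.

Lemma f_3a a : f (3*a) = 3^a.
Proof. induction a. reflexivity. destruct a. reflexivity.
  replace (3 * S (S a)) with (S (S (S (3 * S a)))) by lia. rewrite f_plus3 by lia. rewrite IHa. simpl. lia. Qed.
Lemma f_3a2 a : f (3*a+2) = 2*3^a.
Proof. induction a. reflexivity.
  replace (3 * S a + 2) with (S (S (S (3 * a + 2)))) by lia. rewrite f_plus3 by lia. rewrite IHa. simpl. lia. Qed.
Lemma f_3a4 a : f (3*a+4) = 4*3^a.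
Proof. induction a. reflexivity.
  replace (3 * S a + 4) with (S (S (S (3 * a + 4)))) by lia. rewrite f_plus3 by lia. rewrite IHa. simpl. lia. Qed.

Lemma f_supermul a b : f a * f b <= f (a + b).
Proof.
  remember (a+b) as s. revert a b Heqs.
  induction s as [s IH] using lt_wf_ind. intros a b Hs.
  destruct (le_lt_dec a 4) as [Ha|Ha].
  - destruct (le_lt_dec b 4) as [Hb|Hb].
    + subst. do 5 (destruct a as [|a]; [do 5 (destruct b as [|b]; [simpl; lia|]); lia|]). lia.
    + replace (f b) with (f (S (S (S (b-3))))) by (f_equal; lia). rewrite f_plus3 by lia.
      subst s. replace (a + b) with (S (S (S (a + (b-3))))) by lia. rewrite f_plus3 by lia. specialize (IH (a+(b-3)) ltac:(lia) a (b-3) eq_refl). lia.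
  - replace (f a) with (f (S (S (S (a-3))))) by (f_equal; lia). rewrite f_plus3 by lia.
    subst s. replace (a + b) with (S (S (S ((a-3) + b)))) by lia. rewrite f_plus3 by lia. specialize (IH ((a-3)+b) ltac:(lia) (a-3) b eq_refl). lia.
Qed.

Lemma f_big k : 5 <= k -> 9 * k <= 8 * f k.
Proof.
  induction k as [k IH] using lt_wf_ind. intros Hk.
  destruct (le_lt_dec k 7) as [H|H].
  - assert (k = 5 \/ k = 6 \/ k = 7) as [ -> | [ -> | -> ] ] by lia; simpl; lia.
  - replace k with (S (S (S (k-3)))) by lia. rewrite f_plus3 by lia.
    specialize (IH (k-3) ltac:(lia) ltac:(lia)). lia.
Qed.

Definition tightb k j := Nat.eqb (k * f j) (f (k + j)).

Lemma tight_per k j : 2 <= j -> tightb k (S (S (S j))) = tightb k j.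
Proof.
  intros Hj. unfold tightb. rewrite f_plus3 by lia.
  replace (k + S (S (S j))) with (S (S (S (k+j)))) by lia. rewrite f_plus3 by lia.
  destruct (Nat.eqb_spec (k * (3 * f j)) (3 * f (k+j))), (Nat.eqb_spec (k * f j) (f (k + j))); auto; lia.
Qed.

Lemma class_small k j : 1 <= k <= 4 -> k * f j = f (k + j) \/ 9 * k * f j <= 8 * f (k + j).
Proof.
  intros Hk. induction j as [j IH] using lt_wf_ind.
  destruct (le_lt_dec j 4) as [H|H].
  - assert (k = 1 \/ k = 2 \/ k = 3 \/ k = 4) as [->|[ -> | [ -> | -> ] ]] by lia;
    (do 5 (destruct j as [|j]; [simpl; lia|])); lia.
  - replace j with (S (S (S (j-3)))) by lia. rewrite f_plus3 by lia.
    replace (k + S (S (S (j-3)))) with (S (S (S (k+(j-3))))) by lia. rewrite f_plus3 by lia.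
    destruct (IH (j-3) ltac:(lia)); lia.
Qed.

Lemma classify k j : 1 <= k -> (tightb k j = true /\ k * f j = f (k + j)) \/
                                  (tightb k j = false /\ 9 * k * f j <= 8 * f (k + j)).
Proof.
  intros Hk. unfold tightb.
  assert (H : k * f j = f (k + j) \/ 9 * k * f j <= 8 * f (k + j)).
  { destruct (le_lt_dec k 4). apply class_small; lia.
    pose proof (f_big k ltac:(lia)). pose proof (f_supermul k j). right. nia. }
  destruct (Nat.eqb_spec (k * f j) (f (k + j))); [left; auto|right; split; auto].
  destruct H; [contradiction|auto].
Qed.

Lemma kf_le k j : 1 <= k -> k * f j <= f (k + j).
Proof. intros Hk. destruct (classify k j Hk) as [[_ H]|[_ H]]; lia. Qed.

Open Scope nat_scope.

Fixpoint t (a : nat) : nat := match a with 0 => 0 | S a' => t a' + a' + 2 end.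
Lemma t_eq a : 2 * t a = a * (a + 3).
Proof. induction a; simpl t; nia. Qed.

Definition Tc (m : nat) : nat :=
  if (m mod 3 =? 0) then 1 else if (m mod 3 =? 2) then m / 3 + 1 else if m =? 1 then 1 else t (m / 3).

Lemma dm3 a r : r < 3 -> (3*a + r) / 3 = a /\ (3*a+r) mod 3 = r.
Proof. intros. split; [symmetry; apply (Nat.div_unique _ _ _ r)|symmetry; apply (Nat.mod_unique _ _ a)]; lia. Qed.

Lemma Tc_0 a : Tc (3*a) = 1.
Proof. unfold Tc. destruct (dm3 a 0 ltac:(lia)) as [_ H]. rewrite Nat.add_0_r in H. rewrite H. reflexivity. Qed.
Lemma Tc_2 a : Tc (3*a+2) = a+1.
Proof. unfold Tc. destruct (dm3 a 2 ltac:(lia)) as [H1 H]. rewrite H, H1. reflexivity. Qed.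
Lemma Tc_4 a : Tc (3*a+4) = t (a+1).
Proof. unfold Tc. replace (3*a+4) with (3*(a+1)+1) by lia. destruct (dm3 (a+1) 1 ltac:(lia)) as [H1 H]. rewrite H, H1.
  cbn -[Nat.mul t]. destruct (Nat.eqb_spec (3*(a+1)+1) 1); [lia|reflexivity]. Qed.

Lemma tight_per3 k b j : 2 <= j -> tightb k (3*b + j) = tightb k j.
Proof. intros Hj. induction b. reflexivity. replace (3 * S b + j) with (S (S (S (3*b+j)))) by lia.
  rewrite tight_per by lia. exact IHb. Qed.

Lemma sumn_split F a b : sumn F (a + b) = sumn F a + sumn (fun i => F (a + i)) b.
Proof. induction b. simpl. rewrite Nat.add_0_r. lia. rewrite Nat.add_succ_r. simpl. rewrite IHb. lia. Qed.

Lemma tight_false_big k j : 5 <= k -> tightb k j = false.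
Proof. intros Hk. destruct (classify k j ltac:(lia)) as [[_ H]|[H _]]; auto.
  pose proof (f_big k Hk). pose proof (f_supermul k j). pose proof (f_pos j). pose proof (f_pos k). nia. Qed.

Definition TF M j := if tightb (M - j) j then Tc j else 0.

Lemma tight_sum M : 1 <= M -> sumn (TF M) M <= Tc M.
Proof.
  intros HM.
  destruct (le_lt_dec M 12) as [Hs|Hb].
  - do 13 (destruct M as [|M]; [vm_compute; lia|]). lia.
  - replace M with ((M - 4) + 4) at 2 by lia. rewrite sumn_split.
    assert (H0 : sumn (TF M) (M - 4) = 0).
    { assert (sumn (TF M) (M-4) <= sumn (fun _ => 0) (M-4)).
      { apply sumn_le. intros i Hi. unfold TF. rewrite tight_false_big by lia. lia. }
      assert (forall n, sumn (fun _ => 0) n = 0) by (induction n; simpl; lia). rewrite H0 in H. lia. }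
    rewrite H0. simpl sumn. unfold TF.
    replace (M - (M - 4 + 0)) with 4 by lia. replace (M - (M - 4 + 1)) with 3 by lia.
    replace (M - (M - 4 + 2)) with 2 by lia. replace (M - (M - 4 + 3)) with 1 by lia.
    pose proof (Nat.div_mod_eq M 3) as HD. pose proof (Nat.mod_upper_bound M 3 ltac:(lia)) as HR.
    set (a := M / 3) in *. set (r := M mod 3) in *.
    assert (r = 0 \/ r = 1 \/ r = 2) as [Hr|[Hr|Hr]] by lia; rewrite Hr in HD.
    + replace (M - 4 + 0) with (3*(a-2)+2) by lia. replace (M - 4 + 1) with (3*(a-2)+3) by lia.
      replace (M - 4 + 2) with (3*(a-2)+4) by lia. replace (M - 4 + 3) with (3*(a-1)+2) by lia.
      rewrite !tight_per3 by lia.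
      replace (3*(a-2)+3) with (3*(a-1)) by lia. replace M with (3*a) by lia.
      rewrite !Tc_0. vm_compute. lia.
    + replace (M - 4 + 0) with (3*(a-2)+3) by lia. replace (M - 4 + 1) with (3*(a-2)+4) by lia.
      replace (M - 4 + 2) with (3*(a-1)+2) by lia. replace (M - 4 + 3) with (3*(a-1)+3) by lia.
      rewrite !tight_per3 by lia.
      replace (3*(a-2)+3) with (3*(a-1)) by lia. replace (3*(a-1)+3) with (3*a) by lia.
      replace M with (3*(a-1)+4) by lia.
      rewrite !Tc_0, Tc_4, Tc_2, Tc_4.
      change (tightb 4 3) with true. change (tightb 3 4) with true. change (tightb 2 2) with true.
      change (tightb 1 3) with false.
      replace (a-1) with (S (a-2)) by lia. replace (S (a-2) + 1) with (S (a-1)) by lia.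
      replace (a-2+1) with (a-1) by lia. replace (a-1) with (S (a-2)) by lia. simpl t. lia.
    + replace (M - 4 + 0) with (3*(a-2)+4) by lia. replace (M - 4 + 1) with (3*(a-1)+2) by lia.
      replace (M - 4 + 2) with (3*(a-1)+3) by lia. replace (M - 4 + 3) with (3*(a-1)+4) by lia.
      rewrite !tight_per3 by lia.
      change (tightb 4 4) with false. change (tightb 3 2) with true. change (tightb 2 3) with true.
      change (tightb 1 4) with false.
      replace (3*(a-1)+3) with (3*a) by lia. replace M with (3*a+2) by lia.
      rewrite Tc_0, !Tc_2. lia.
Qed.

Open Scope nat_scope.

Definition Bcr j := match j with 0 => 1 | S j' => 2^j' end.
Definition Ef j := match j with 0 => 0 | S j' => 2^j' end.

Lemma sum_B m : sumn Bcr (S m) = 2^m.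
Proof. induction m. reflexivity. change (sumn Bcr (S (S m))) with (sumn Bcr (S m) + Bcr (S m)).
  rewrite IHm. simpl. lia. Qed.

Section Q.
Variable d : nat.
Notation Q := (qcoef (psi d)).

Lemma Q_S m : Q (S m) = sumn (fun j => (S m - j)^d * Q j) (S m).
Proof. rewrite qcoef_S. reflexivity. Qed.

Lemma Q_crude m : Q m <= Bcr m * f m ^ d.
Proof.
  induction m as [m IH] using lt_wf_ind.
  destruct m as [|m]. { rewrite qcoef_0. simpl. rewrite Nat.pow_1_l. lia. }
  rewrite Q_S. change (Bcr (S m)) with (2^m). rewrite <- sum_B, <- sumn_mulr. apply sumn_le. intros j Hj.
  specialize (IH j ltac:(lia)).
  pose proof (kf_le (S m - j) j ltac:(lia)) as Hk. replace (S m - j + j) with (S m) in Hk by lia.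
  apply Nat.pow_le_mono_l with (c := d) in Hk. rewrite Nat.pow_mul_l in Hk.
  apply Nat.le_trans with ((S m - j)^d * (Bcr j * f j ^ d)). apply Nat.mul_le_mono_l; auto.
  nia.
Qed.

Lemma Q_fine m : 9^d * Q m <= Tc m * (9 * f m)^d + Ef m * (8 * f m)^d.
Proof.
  induction m as [m IH] using lt_wf_ind.
  destruct m as [|m]. { rewrite qcoef_0. simpl. lia. }
  rewrite Q_S. rewrite Nat.mul_comm, <- sumn_mulr.
  apply Nat.le_trans with (sumn (fun j => TF (S m) j * (9 * f (S m))^d + Bcr j * (8 * f (S m))^d) (S m)).
  - apply sumn_le. intros j Hj.
    specialize (IH j ltac:(lia)). pose proof (Q_crude j) as Hc.
    assert (HE : Ef j <= Bcr j) by (destruct j; simpl; lia).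
    unfold TF. destruct (classify (S m - j) j ltac:(lia)) as [[Ht Heq]|[Ht Hle]]; rewrite Ht;
      replace (S m - j + j) with (S m) in * by lia.
    + rewrite <- Heq. rewrite !Nat.pow_mul_l in *.
      set (K := (S m - j)^d) in *. set (A := 9^d) in *. set (B := 8^d) in *. set (C := f j ^ d) in *.
      assert (K * (A * Q j) <= K * (Tc j * (A * C) + Ef j * (B * C))) by (apply Nat.mul_le_mono_l; auto).
      assert (Ef j * (B * (K * C)) <= Bcr j * (B * (K * C))) by (apply Nat.mul_le_mono_r; auto). nia.
    + apply Nat.pow_le_mono_l with (c := d) in Hle. rewrite !Nat.pow_mul_l in *.
      set (K := (S m - j)^d) in *. set (A := 9^d) in *. set (B := 8^d) in *. set (C := f j ^ d) in *.
      set (G := f (S m) ^ d) in *.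
      assert (K * Q j * A <= K * (Bcr j * C) * A) by (apply Nat.mul_le_mono_r, Nat.mul_le_mono_l; auto).
      nia.
  - rewrite sumn_add, !sumn_mulr, sum_B. change (Ef (S m)) with (2^m).
    pose proof (tight_sum (S m) ltac:(lia)). nia.
Qed.

Lemma Q_ge_term m j : j <= m -> (S m - j)^d * Q j <= Q (S m).
Proof. intros. rewrite Q_S. apply (sumn_term (fun j => (S m - j)^d * Q j)). lia. Qed.

Lemma Q_low0 a : f (3*a) ^ d <= Q (3*a).
Proof.
  induction a. simpl. rewrite Nat.pow_1_l, qcoef_0. lia.
  replace (3 * S a) with (S (S (S (3*a)))) by lia.
  pose proof (Q_ge_term (S (S (3*a))) (3*a) ltac:(lia)). replace (S (S (S (3*a))) - 3*a) with 3 in H by lia.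
  replace (S (S (S (3*a)))) with (3 * S a) in * by lia. rewrite !f_3a in *.
  rewrite Nat.pow_succ_r', Nat.pow_mul_l. assert (3^d * (3^a)^d <= 3^d * Q (3*a)) by (apply Nat.mul_le_mono_l; auto). lia.
Qed.

Lemma Q_low2 a : (a+1) * f (3*a+2) ^ d <= Q (3*a+2).
Proof.
  induction a.
  - simpl. pose proof (Q_ge_term 1 0 ltac:(lia)). simpl in H. rewrite qcoef_0 in H. lia.
  - pose proof (sumn_two (fun j => (S (3 * a + 4) - j)^d * Q j) (S (3*a+4)) (3*a+2) (3*a+3) ltac:(lia) ltac:(lia)) as H2.
    cbv beta in H2. rewrite <- Q_S in H2.
    replace (S (3 * a + 4) - (3*a+2)) with 3 in H2 by lia.
    replace (S (3 * a + 4) - (3*a+3)) with 2 in H2 by lia.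
    replace (S (3*a+4)) with (3 * S a + 2) in H2 by lia.
    replace (3*a+3) with (3 * S a) in H2 by lia.
    pose proof (Q_low0 (S a)) as H0.
    rewrite !f_3a2 in *. rewrite f_3a in H0.
    rewrite Nat.pow_succ_r' in *. rewrite !Nat.pow_mul_l in *.
    set (A := (3^a)^d) in *. set (T := 3^d) in *. set (W := 2^d) in *.
    assert (T * ((a+1) * (W * A)) <= T * Q (3*a+2)) by (apply Nat.mul_le_mono_l; auto).
    assert (W * (T * A) <= W * Q (3 * S a)) by (apply Nat.mul_le_mono_l; auto).
    nia.
Qed.
End Q.

Open Scope R_scope.

Lemma ln98_pos : 0 < ln (9/8).
Proof. rewrite <- ln_1. apply ln_increasing; lra. Qed.

Lemma conv (d A B : nat) (L : R) : (0 < A)%nat -> (0 < B)%nat ->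
  ln (INR A) - ln (INR B) <= L -> L < INR d * ln (9/8) -> (A * 8^d < B * 9^d)%nat.
Proof.
  intros HA HB H1 H2. apply INR_lt. rewrite !mult_INR, !pow_INR.
  assert (HA' : 0 < INR A) by (apply lt_0_INR; lia). assert (HB' : 0 < INR B) by (apply lt_0_INR; lia).
  replace (INR 8) with 8 by (simpl; lra). replace (INR 9) with ((9/8)*8) by (simpl; lra).
  rewrite Rpow_mult_distr.
  assert (P8 : 0 < 8 ^ d) by (apply pow_lt; lra). assert (P9 : 0 < (9/8) ^ d) by (apply pow_lt; lra).
  apply ln_lt_inv. apply Rmult_lt_0_compat; auto.
  apply Rmult_lt_0_compat; [|apply Rmult_lt_0_compat]; auto.
  rewrite !ln_mult; auto. 2: apply Rmult_lt_0_compat; auto.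
  rewrite !ln_pow by lra. lra.
Qed.

Lemma ln2pow k : ln (INR (2^k)) = INR k * ln 2.
Proof. rewrite pow_INR. replace (INR 2) with 2 by (simpl; lra). apply ln_pow. lra. Qed.

Lemma log98_mul x : log98 x * ln (9/8) = ln x.
Proof. unfold log98. pose proof ln98_pos. field. lra. Qed.

Lemma ratio_iff (a b c : nat) : (0 < b * c)%nat ->
  ((INR a)^2 / (INR b * INR c) < 1 <-> (a * a < b * c)%nat).
Proof.
  intros H. assert (Hb : 0 < INR b) by (apply lt_0_INR; nia). assert (Hc : 0 < INR c) by (apply lt_0_INR; nia).
  assert (Hp : 0 < INR b * INR c) by (rewrite <- mult_INR; apply lt_0_INR; auto).
  split; intros H1.
  - apply INR_lt. rewrite !mult_INR. apply Rmult_lt_compat_r with (r := INR b * INR c) in H1; auto.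
    replace (INR a ^ 2 / (INR b * INR c) * (INR b * INR c)) with (INR a * INR a) in H1 by (field; split; lra). lra.
  - apply lt_INR in H1. rewrite !mult_INR in H1.
    apply Rmult_lt_reg_r with (r := INR b * INR c); auto.
    replace (INR a ^ 2 / (INR b * INR c) * (INR b * INR c)) with (INR a * INR a) by (field; split; lra). lra.
Qed.

Open Scope nat_scope.

Section C.
Variable d : nat.
Notation Q := (qcoef (psi d)).

Lemma Q_pos m : 1 <= Q m.
Proof. induction m. rewrite qcoef_0; lia. pose proof (Q_ge_term d m m (le_n _)).
  replace (S m - m) with 1 in H by lia. rewrite Nat.pow_1_l in H. lia. Qed.

Lemma core0 b : 2^(6*b+6) * 8^d < 1 * 9^d -> Q (3*b+2) * Q (3*b+4) <= Q (3*b+3) * Q (3*b+3).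
Proof.
  intros H.
  pose proof (Q_crude d (3*b+2)) as H1. pose proof (Q_crude d (3*b+4)) as H2.
  pose proof (Q_low0 d (b+1)) as H3. replace (3*(b+1)) with (3*b+3) in H3 by lia.
  replace (Bcr (3*b+2)) with (2^(3*b+1)) in H1 by (replace (3*b+2) with (S (3*b+1)) by lia; reflexivity).
  replace (Bcr (3*b+4)) with (2^(3*b+3)) in H2 by (replace (3*b+4) with (S (3*b+3)) by lia; reflexivity).
  rewrite f_3a2 in H1. rewrite f_3a4 in H2. replace (3*b+3) with (3*(b+1)) in H3 by lia. rewrite f_3a in H3.
  replace (3*(b+1)) with (3*b+3) in H3 by lia.
  rewrite Nat.pow_add_r, Nat.pow_1_r in H3.
  rewrite !Nat.pow_mul_l in *.
  set (Z := (3^b)^d) in *.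
  assert (E1 : Q (3*b+2) * Q (3*b+4) <= (2^(3*b+1) * (2^d * Z)) * (2^(3*b+3) * (4^d * Z))) by (apply Nat.mul_le_mono; auto).
  assert (E2 : (Z * 3^d) * (Z * 3^d) <= Q (3*b+3) * Q (3*b+3)) by (apply Nat.mul_le_mono; auto).
  replace ((2^(3*b+1) * (2^d * Z)) * (2^(3*b+3) * (4^d * Z))) with (2^(6*b+4) * (2^d * 4^d) * (Z*Z)) in E1
    by (replace (6*b+4) with ((3*b+1)+(3*b+3)) by lia; rewrite Nat.pow_add_r; ring).
  replace ((Z * 3^d) * (Z * 3^d)) with ((3^d*3^d) * (Z*Z)) in E2 by ring.
  rewrite <- Nat.pow_mul_l in E1, E2. simpl (2*4) in E1. simpl (3*3) in E2.
  assert (2^(6*b+4) <= 2^(6*b+6)) by (apply Nat.pow_le_mono_r; lia).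
  assert (2^(6*b+4) * 8^d * (Z*Z) <= 9^d * (Z*Z)) by (apply Nat.mul_le_mono_r; nia).
  lia.
Qed.

Lemma core1 b : 2^(6*b+8) * 8^d < (b+2) * 9^d -> Q (3*b+4) * Q (3*b+4) < Q (3*b+3) * Q (3*b+5).
Proof.
  intros H.
  pose proof (Q_crude d (3*b+4)) as H1.
  pose proof (Q_low0 d (b+1)) as H3. pose proof (Q_low2 d (b+1)) as H4.
  rewrite f_3a2 in H4. replace (3*(b+1)+2) with (3*b+5) in H4 by lia.
  replace (Bcr (3*b+4)) with (2^(3*b+3)) in H1 by (replace (3*b+4) with (S (3*b+3)) by lia; reflexivity).
  rewrite f_3a4 in H1. rewrite f_3a in H3.
  replace (3*(b+1)) with (3*b+3) in H3 by lia.
  rewrite Nat.pow_add_r, Nat.pow_1_r in H3, H4.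
  rewrite !Nat.pow_mul_l in *.
  set (Z := (3^b)^d) in *.
  assert (E1 : Q (3*b+4) * Q (3*b+4) <= (2^(3*b+3) * (4^d * Z)) * (2^(3*b+3) * (4^d * Z))) by (apply Nat.mul_le_mono; auto).
  assert (E2 : (Z * 3^d) * ((b+1+1) * (2^d * (Z * 3^d))) <= Q (3*b+3) * Q (3*b+5)) by (apply Nat.mul_le_mono; auto).
  replace ((2^(3*b+3) * (4^d * Z)) * (2^(3*b+3) * (4^d * Z))) with (2^(6*b+6) * (4^d*4^d) * (Z*Z)) in E1
    by (replace (6*b+6) with ((3*b+3)+(3*b+3)) by lia; rewrite Nat.pow_add_r; ring).
  assert (E3 : 8^d * (2^(6*b+6) * (4^d*4^d) * (Z*Z)) < 8^d * ((Z * 3^d) * ((b+1+1) * (2^d * (Z * 3^d))))).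
  { replace (8^d * (2^(6*b+6) * (4^d*4^d) * (Z*Z))) with ((2^(6*b+6) * 8^d) * ((4^d*4^d) * (Z*Z))) by ring.
    replace (8^d * ((Z * 3^d) * ((b+1+1) * (2^d * (Z * 3^d))))) with (((b+2)* (3^d*3^d)) * ((8^d * 2^d) * (Z*Z))) by ring.
    rewrite <- !Nat.pow_mul_l. simpl (3*3). simpl (4*4). simpl (8*2).
    assert (0 < 16^d * (Z*Z)). { assert (1 <= Z) by (apply Nat.pow_le_mono_l with (c:=d) (n:=1) (m:=3^b); pose proof (Nat.pow_le_mono_r 3 0 b); simpl in *; lia) || (unfold Z; pose proof (Nat.pow_nonzero (3^b) d); pose proof (Nat.pow_nonzero 3 b); lia).
      pose proof (Nat.pow_nonzero 16 d). nia. }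
    assert (2^(6*b+6) <= 2^(6*b+8)) by (apply Nat.pow_le_mono_r; lia).
    assert (X1: 2^(6*b+6)*8^d <= 2^(6*b+8)*8^d) by (apply Nat.mul_le_mono_r; auto). rewrite <- Nat.mul_lt_mono_pos_r by auto. lia. }
  assert (E4 : 8^d * (Q (3*b+4) * Q (3*b+4)) < 8^d * (Q (3*b+3) * Q (3*b+5))).
  { pose proof (Nat.mul_le_mono_l _ _ (8^d) E1). pose proof (Nat.mul_le_mono_l _ _ (8^d) E2). lia. }
  apply Nat.mul_lt_mono_pos_l with (p := 8^d). pose proof (Nat.pow_nonzero 8 d). lia. exact E4.
Qed.
End C.

Open Scope nat_scope.

Lemma key_ineq t c X v : 2 * t = c * (c + 3) -> 16 * v <= X -> (t*X + v) * (X + 4*v) <= (c+1)*(c+1)*(X*X).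
Proof.
  intros Ht Hv.
  assert (A1 : 16*v*(t*X) <= X*(t*X)) by (apply Nat.mul_le_mono_r; auto).
  assert (A2 : 16*v*X <= X*X) by (apply Nat.mul_le_mono_r; auto).
  assert (A3 : 16*v*v <= X*v) by (apply Nat.mul_le_mono_r; auto).
  nia.
Qed.

Section C.
Variable d : nat.
Notation Q := (qcoef (psi d)).

Lemma core2 b : 2^(3*b+7) * 8^d < 9^d -> Q (3*b+4) * Q (3*b+6) <= Q (3*b+5) * Q (3*b+5).
Proof.
  intros H.
  pose proof (Q_fine d (3*b+4)) as H1. pose proof (Q_fine d (3*b+6)) as H2.
  pose proof (Q_low2 d (b+1)) as H3. rewrite f_3a2 in H3. replace (3*(b+1)+2) with (3*b+5) in H3 by lia.
  rewrite Tc_4 in H1. replace (3*b+6) with (3*(b+2)) in H2 by lia. rewrite Tc_0 in H2.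
  replace (Ef (3*b+4)) with (2^(3*b+3)) in H1 by (replace (3*b+4) with (S (3*b+3)) by lia; reflexivity).
  replace (Ef (3*(b+2))) with (4 * 2^(3*b+3)) in H2
    by (replace (3*(b+2)) with (S (3*b+5)) by lia; change (Ef (S (3*b+5))) with (2^(3*b+5)); replace (3*b+5) with (2 + (3*b+3)) by lia; rewrite (Nat.pow_add_r 2 2 (3*b+3)); reflexivity).
  rewrite f_3a4 in H1. rewrite f_3a in H2. replace (3*(b+2)) with (3*b+6) in H2 by lia.
  replace (3^(b+2)) with (9 * 3^b) in H2 by (rewrite Nat.pow_add_r; simpl; ring).
  replace (3^(b+1)) with (3 * 3^b) in H3 by (rewrite Nat.pow_add_r; simpl; ring).
  rewrite !Nat.pow_mul_l in *.
  set (Z := (3^b)^d) in *. set (X := 9^d) in *. set (Y := 8^d) in *.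
  set (v := 2^(3*b+3) * Y).
  assert (Hv : 16 * v <= X).
  { unfold v. replace (3*b+7) with (4 + (3*b+3)) in H by lia. rewrite (Nat.pow_add_r 2 4) in H. simpl (2^4) in H. lia. }
  pose proof (t_eq (b+1)) as Ht. set (t1 := t (b+1)) in *.
  assert (U1 : X * Q (3*b+4) <= (t1 * X + v) * (4^d * Z)) by (unfold v; lia).
  assert (U2 : X * Q (3*b+6) <= (X + 4 * v) * (X * Z)) by (unfold v; lia).
  assert (HG : 4^d * Z * (X * Z) = (2^d * (3^d * Z)) * (2^d * (3^d * Z))).
  { unfold X. replace (9^d) with (3^d*3^d) by (rewrite <- Nat.pow_mul_l; reflexivity).
    replace (4^d) with (2^d*2^d) by (rewrite <- Nat.pow_mul_l; reflexivity). ring. }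
  set (G := 2^d * (3^d * Z)) in *.
  assert (K := key_ineq t1 (b+1) X v Ht Hv).
  assert (P1 : (X * Q (3*b+4)) * (X * Q (3*b+6)) <= ((t1 * X + v) * (4^d * Z)) * ((X + 4 * v) * (X * Z)))
    by (apply Nat.mul_le_mono; auto).
  replace (((t1 * X + v) * (4^d * Z)) * ((X + 4 * v) * (X * Z))) with (((t1 * X + v) * (X + 4 * v)) * (4^d * Z * (X * Z))) in P1 by ring.
  rewrite HG in P1.
  assert (P2 : ((t1 * X + v) * (X + 4 * v)) * (G * G) <= ((b+1+1)*(b+1+1)*(X*X)) * (G*G)) by (apply Nat.mul_le_mono_r; auto).
  assert (P3 : ((b+1+1) * G) * ((b+1+1) * G) <= Q (3*b+5) * Q (3*b+5)) by (apply Nat.mul_le_mono; auto).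
  assert (HX : 0 < X * X) by (unfold X; pose proof (Nat.pow_nonzero 9 d); nia).
  apply (Nat.mul_le_mono_pos_l _ _ (X*X) HX).
  replace (X * X * (Q (3 * b + 4) * Q (3 * b + 6))) with ((X * Q (3*b+4)) * (X * Q (3*b+6))) by ring.
  replace (X * X * (Q (3 * b + 5) * Q (3 * b + 5))) with ((X*X) * (Q (3 * b + 5) * Q (3 * b + 5))) by ring.
  assert (P4 : (X*X) * (((b+1+1) * G) * ((b+1+1) * G)) <= (X*X) * (Q (3 * b + 5) * Q (3 * b + 5))) by (apply Nat.mul_le_mono_l; auto).
  replace ((X*X) * (((b+1+1) * G) * ((b+1+1) * G))) with (((b+1+1)*(b+1+1)*(X*X)) * (G*G)) in P4 by ring.
  lia.
Qed.
End C.

Open Scope R_scope.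

Lemma pow2_pos k : (0 < 2^k)%nat.
Proof. pose proof (Nat.pow_nonzero 2 k). lia. Qed.
Ltac ppos := try lia; try (match goal with |- (0 < 2^?k * _)%nat => pose proof (pow2_pos k); lia | |- (0 < 2^?k)%nat => apply pow2_pos end).

Theorem corollary1 (n d : nat) :
  (3 <= n)%nat -> INR d > Dpsi n ->
  ((INR (qcoef (psi d) n))^2 / (INR (qcoef (psi d) (n-1)) * INR (qcoef (psi d) (n+1))) < 1
   <-> (n mod 3 = 1)%nat).
Proof.
  intros Hn Hd.
  rewrite ratio_iff by (pose proof (Q_pos d (n-1)); pose proof (Q_pos d (n+1)); nia).
  pose proof ln98_pos as Hl.
  assert (Hd' : Dpsi n * ln (9/8) < INR d * ln (9/8)) by (apply Rmult_lt_compat_r; lra).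
  pose proof (Nat.div_mod_eq n 3) as HD. pose proof (Nat.mod_upper_bound n 3 ltac:(lia)) as HR.
  unfold Dpsi in Hd'.
  remember (n mod 3) as r eqn:Hr. set (a := (n / 3)%nat) in *.
  assert (r = 0 \/ r = 1 \/ r = 2)%nat as [H0|[H0|H0]] by lia; subst r; rewrite H0 in Hd'.
  -
    replace (n =? 5)%nat with false in Hd' by (symmetry; apply Nat.eqb_neq; lia).
    assert (Hc : (2^(2*n) * 8^d < 1 * 9^d)%nat).
    { apply (conv d _ _ (2 * INR n * ln 2)); ppos.
      - rewrite ln2pow. simpl (INR 1). rewrite ln_1, mult_INR. simpl (INR 2). lra.
      - replace (2 * INR n * ln 2) with (2 * INR n * log98 2 * ln (9/8)) by (rewrite Rmult_assoc, log98_mul; ring). lra. }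
    replace n with (3*(a-1)+3)%nat in * by lia.
    replace (2*(3*(a-1)+3))%nat with (6*(a-1)+6)%nat in Hc by lia.
    pose proof (core0 d (a-1) Hc).
    replace (3*(a-1)+3-1)%nat with (3*(a-1)+2)%nat by lia. replace (3*(a-1)+3+1)%nat with (3*(a-1)+4)%nat by lia.
    split; intros; lia.
  -
    replace (n =? 5)%nat with false in Hd' by (symmetry; apply Nat.eqb_neq; lia).
    assert (Hc : (2^(2*n) * 3 * 8^d < (n+2) * 9^d)%nat).
    { apply (conv d _ _ (2 * INR n * ln 2 + ln 3 - ln (INR n + 2))); ppos.
      - rewrite !mult_INR, ln_mult, ln2pow, plus_INR, mult_INR. simpl (INR 2). simpl (INR 3).
        replace (1+1+1) with 3 by lra. replace (INR n + (1+1)) with (INR n + 2) by lra. lra.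
        apply lt_0_INR, pow2_pos.
        simpl; lra.
      - replace (2 * INR n * ln 2 + ln 3 - ln (INR n + 2)) with
          ((2 * INR n * log98 2 + log98 3 - log98 (INR n + 2)) * ln (9/8)).
        lra. unfold log98. field. lra. }
    replace n with (3*(a-1)+4)%nat in * by lia.
    assert (Hc' : (2^(6*(a-1)+8) * 8^d < (a-1+2) * 9^d)%nat).
    { replace (2*(3*(a-1)+4))%nat with (6*(a-1)+8)%nat in Hc by lia.
      replace (3*(a-1)+4+2)%nat with (3*(a-1+2))%nat in Hc by lia. nia. }
    pose proof (core1 d (a-1) Hc').
    replace (3*(a-1)+4-1)%nat with (3*(a-1)+3)%nat by lia. replace (3*(a-1)+4+1)%nat with (3*(a-1)+5)%nat by lia.
    split; intros; auto.
  -
    assert (Hc : (2^(n+2) * 8^d < 9^d)%nat).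
    { destruct (Nat.eqb_spec n 5).
      + assert (Hc : (2^9 * 8^d < 1 * 9^d)%nat).
        { apply (conv d _ _ (ln 512)); ppos.
          - rewrite ln2pow. simpl (INR 1). rewrite ln_1.
            replace 512 with (2^9) by lra. rewrite ln_pow by lra. simpl (INR 9). lra.
          - replace (ln 512) with (log98 512 * ln (9/8)) by apply log98_mul. lra. }
        subst n. simpl (5+2)%nat. assert (2^7 <= 2^9)%nat by (apply Nat.pow_le_mono_r; lia). nia.
      + replace (9^d)%nat with (1 * 9^d)%nat by lia.
        apply (conv d _ _ ((INR n + 2) * ln 2)); ppos.
        * rewrite ln2pow. simpl (INR 1). rewrite ln_1, plus_INR. simpl (INR 2). lra.
        * replace ((INR n + 2) * ln 2) with ((INR n + 2) * log98 2 * ln (9/8)) by (rewrite Rmult_assoc, log98_mul; ring). lra. }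
    replace n with (3*(a-1)+5)%nat in * by lia.
    replace (3*(a-1)+5+2)%nat with (3*(a-1)+7)%nat in Hc by lia.
    pose proof (core2 d (a-1) Hc).
    replace (3*(a-1)+5-1)%nat with (3*(a-1)+4)%nat by lia. replace (3*(a-1)+5+1)%nat with (3*(a-1)+6)%nat by lia.
    split; intros; lia.
Qed.
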